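(* Let $\{\mathbb{G}_n,\ n=2,3,\ldots\}$ be a sequence of random graphs as described in the context, with $\lim_{n\to\infty}|V_n|=\infty$, and assume that for each $n$, $D_{n,k}$ has the same distribution as $D_{n,1}$ for all $k\in V_n$, and for all distinct $k,\ell\in V_n$, $(D_{n,k},D_{n,\ell})$ has the same joint distribution as $(D_{n,1},D_{n,2})$. Assume that for every $d=0,1,\ldots$ there exists a scalar $L(d)$ such that $P_n(d)\to L(d)$ in probability as $n\to\infty$. If the values $\{L(d),\ d=0,1,\ldots\}$ constitute a pmf $p=(p(d),\ d=0,1,\ldots)$ on $\mathbb{N}$ (i.e. $p(d)=L(d)$), then: (i) there exists an $\mathbb{N}$-valued random variable $D$ with pmf $p$ such that $D_{n,1}\to D$ in distribution; and (ii) for each $d=0,1,\ldots$, $\lim_{n\to\infty}\mathrm{Cov}\big[\mathbf{1}[D_{n,1}=d],\mathbf{1}[D_{n,2}=d]\big]=0$.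
   Context: All random variables are defined on a common probability space $(\Omega,\mathcal{F},\mathbb{P})$. For each $n=2,3,\ldots$, $\mathbb{G}_n$ is a random (possibly directed, self-loops allowed) graph on the deterministic finite node set $V_n=\{1,\ldots,k_n\}$ with $k_n\ge 2$, determined by $\{0,1\}$-valued edge random variables $\{\chi_n(k,\ell),\ k,\ell\in V_n\}$ ($\chi_n(k,\ell)=1$ iff there is an edge from $k$ to $\ell$). The degree of node $k$ is $D_{n,k}=\sum_{\ell\in V_n}\chi_n(k,\ell)$. For $d=0,1,\ldots$, $N_n(d)=\sum_{k\in V_n}\mathbf{1}[D_{n,k}=d]$ and $P_n(d)=N_n(d)/|V_n|$. $\mathbb{N}=\{0,1,2,\ldots\}$. *)

(* Defs.v *)
From HB Require Import structures.
From mathcomp Require Import all_boot all_order all_algebra.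
From mathcomp Require Import all_classical all_reals all_analysis.
Set Implicit Arguments. Unset Strict Implicit. Unset Printing Implicit Defensive.
Import Order.TTheory GRing.Theory Num.Theory.
Import numFieldNormedType.Exports.
Local Open Scope classical_set_scope.
Local Open Scope ring_scope.

(* Node set V_n = {1,...,k_n}; edge indicators chi n k l : T -> bool. *)
Definition degree {T : Type} (kn : nat -> nat) (chi : nat -> nat -> nat -> T -> bool)
    (n j : nat) (w : T) : nat :=
  (\sum_(1 <= l < (kn n).+1) chi n j l w)%N.

Definition Ncount {T : Type} (kn : nat -> nat) (chi : nat -> nat -> nat -> T -> bool)
    (n d : nat) (w : T) : nat :=
  (\sum_(1 <= j < (kn n).+1) (degree kn chi n j w == d))%N.

Definition Pfrac {R : realType} {T : Type} (kn : nat -> nat)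
    (chi : nat -> nat -> nat -> T -> bool) (n d : nat) (w : T) : R :=
  (Ncount kn chi n d w)%:R / (kn n)%:R.

Definition cvg_in_prob {d} {T : measurableType d} {R : realType}
    (P : probability T R) (X : nat -> T -> R) (c : R) : Prop :=
  forall eps : R, 0 < eps ->
    (fun n => P [set w | eps <= `|X n w - c|]) @ \oo --> 0%E.

Definition cdfN {d} {T : measurableType d} {R : realType}
    (P : probability T R) (X : T -> nat) (x : R) : R :=
  fine (P [set w | (X w)%:R <= x]).

Definition cvg_in_distrN {d d'} {T : measurableType d} {T' : measurableType d'}
    {R : realType} (P : probability T R) (X : nat -> T -> nat)
    (Q : probability T' R) (Y : T' -> nat) : Prop :=
  forall x : R, {for x, continuous (cdfN Q Y)} ->
    (fun n => cdfN P (X n) x) @ \oo --> cdfN Q Y x.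

(* Main.v *)
Require Import Defs.
From HB Require Import structures.
From mathcomp Require Import all_boot all_order all_algebra.
From mathcomp Require Import all_classical all_reals all_analysis.
From mathcomp Require Import measurable_realfun lebesgue_Rintegral.
From mathcomp Require Import zify ring lra.
From Stdlib Require Import Lia.
Import Order.TTheory GRing.Theory Num.Theory.
Import numFieldNormedType.Exports.
Local Open Scope classical_set_scope.
Local Open Scope ring_scope.
Definition bm {d} {T : measurableType d} {R : realType} (f : T -> R) :=
  measurable_fun setT f /\ exists M : R, forall x, `|f x| <= M.

Lemma bm_cst {d} {T : measurableType d} {R : realType} (c : R) : bm (fun _ : T => c).
Proof. by split; [exact: measurable_cst | exists `|c|]. Qed.

Lemma bm_add {d} {T : measurableType d} {R : realType} (f g : T -> R) :
  bm f -> bm g -> bm (fun x => f x + g x).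
Proof.
move=> [mf [M Mf]] [mg [N Ng]]; split; first exact: measurable_funD.
exists (M + N) => x; apply: le_trans (ler_normD _ _) _; exact: lerD.
Qed.

Lemma bm_mul {d} {T : measurableType d} {R : realType} (f g : T -> R) :
  bm f -> bm g -> bm (fun x => f x * g x).
Proof.
move=> [mf [M Mf]] [mg [N Ng]]; split; first exact: measurable_funM.
exists (M * N) => x; rewrite normrM; apply: ler_pM => //.
Qed.

Lemma bm_opp {d} {T : measurableType d} {R : realType} (f : T -> R) :
  bm f -> bm (fun x => - f x).
Proof.
move=> [mf [M Mf]]; split; first exact: measurableT_comp.
by exists M => x; rewrite normrN.
Qed.

Lemma bm_norm {d} {T : measurableType d} {R : realType} (f : T -> R) :
  bm f -> bm (fun x => `|f x|).
Proof.
move=> [mf [M Mf]]; split; first exact: measurableT_comp.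
by exists M => x; rewrite normr_id.
Qed.

Lemma bm_indic {d} {T : measurableType d} {R : realType} (A : set T) :
  measurable A -> bm (\1_A : T -> R).
Proof.
move=> mA; split; first exact: measurable_indic.
exists 1 => x; rewrite indicE; by case: (x \in A); rewrite ?normr1 ?normr0.
Qed.

Lemma bm_sum {d} {T : measurableType d} {R : realType} (I : Type) (s : seq I)
  (F : I -> T -> R) : (forall i, bm (F i)) -> bm (fun x => \sum_(i <- s) F i x).
Proof.
move=> hF; elim: s => [|i s IH].
  by under eq_fun do rewrite big_nil; exact: bm_cst.
under eq_fun do rewrite big_cons; exact: bm_add.
Qed.

Lemma bm_int {d} {T : measurableType d} {R : realType} (P : probability T R)
  (f : T -> R) : bm f -> P.-integrable setT (EFin \o f).
Proof.
move=> [mf [M Mf]]; apply: measurable_bounded_integrable => //.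
  by rewrite [X in (X < _)%E]probability_setT ltry.
exists M; split; first by rewrite num_real.
move=> y My x _; exact: le_trans (Mf x) (ltW My).
Qed.

Lemma bm_Lfun {d} {T : measurableType d} {R : realType} (P : probability T R)
  (f : T -> R) : bm f -> f \in Lfun P 1.
Proof. by move=> bf; apply/Lfun1_integrable; exact: bm_int. Qed.

Lemma bm_E {d} {T : measurableType d} {R : realType} (P : probability T R)
  (f : T -> R) : bm f -> ('E_P[f] = (Rintegral P setT f)%:E)%E.
Proof.
move=> bf; rewrite unlock /Rintegral fineK//.
by have := integrable_fin_num measurableT (bm_int P _ bf).
Qed.
Definition Rint {d} {T : measurableType d} {R : realType} (P : probability T R)
  (f : T -> R) := Rintegral P setT f.

Lemma RiD {d} {T : measurableType d} {R : realType} (P : probability T R) (f g : T -> R) :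
  bm f -> bm g -> Rint P (fun x => f x + g x) = Rint P f + Rint P g.
Proof. by move=> bf bg; rewrite /Rint RintegralD//; exact: bm_int. Qed.

Lemma RiZ {d} {T : measurableType d} {R : realType} (P : probability T R) (f : T -> R) c :
  bm f -> Rint P (fun x => c * f x) = c * Rint P f.
Proof. by move=> bf; rewrite /Rint RintegralZl//; exact: bm_int. Qed.

Lemma Ri_cst {d} {T : measurableType d} {R : realType} (P : probability T R) (c : R) :
  Rint P (fun _ => c) = c.
Proof. by rewrite /Rint Rintegral_cst// [X in fine X]probability_setT /= mulr1. Qed.

Lemma Ri_indic {d} {T : measurableType d} {R : realType} (P : probability T R) (A : set T) :
  measurable A -> Rint P (\1_A) = fine (P A).
Proof.
move=> mA; rewrite -(@expectation_indic _ _ _ P A mA) (bm_E P _ (bm_indic _ mA)) /=.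
by [].
Qed.

Lemma Ri_le {d} {T : measurableType d} {R : realType} (P : probability T R) (f g : T -> R) :
  bm f -> bm g -> (forall x, f x <= g x) -> Rint P f <= Rint P g.
Proof. by move=> bf bg fg; rewrite /Rint le_Rintegral//; exact: bm_int. Qed.

Lemma Ri_norm {d} {T : measurableType d} {R : realType} (P : probability T R) (f : T -> R) :
  bm f -> `|Rint P f| <= Rint P (fun x => `|f x|).
Proof. by move=> bf; rewrite /Rint le_normr_Rintegral//; exact: bm_int. Qed.

Lemma Ri_sum {d} {T : measurableType d} {R : realType} (P : probability T R) (I : Type)
  (s : seq I) (F : I -> T -> R) : (forall i, bm (F i)) ->
  Rint P (fun x => \sum_(i <- s) F i x) = \sum_(i <- s) Rint P (F i).
Proof.
move=> hF; elim: s => [|i s IH].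
  by rewrite big_nil; under eq_fun do rewrite big_nil; exact: Ri_cst.
rewrite big_cons -IH -RiD//; last exact: bm_sum.
by under eq_fun do rewrite big_cons.
Qed.
Lemma meas_sum_eq {d} {T : measurableType d} (s : seq nat) (c : nat -> T -> bool) :
  (forall l, measurable [set w | c l w]) ->
  forall m, measurable [set w | (\sum_(l <- s) c l w)%N = m].
Proof.
move=> hc; elim: s => [|x s IH] m.
  case: m => [|m].
    by rewrite (_ : [set w | _] = setT); [exact: measurableT|
      apply/seteqP; split => w //=; rewrite big_nil].
  by rewrite (_ : [set w | _] = set0); [exact: measurable0|
      apply/seteqP; split => w //=; rewrite big_nil].
case: m => [|m].
  rewrite (_ : [set w | _] = ~` [set w | c x w] `&` [set w | (\sum_(l <- s) c l w)%N = 0%N]).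
    by apply: measurableI; [exact: measurableC | exact: IH].
  apply/seteqP; split => w /=; rewrite big_cons.
    by case: (c x w).
  by case: (c x w) => //= -[].
rewrite (_ : [set w | _] = ([set w | c x w] `&` [set w | (\sum_(l <- s) c l w)%N = m])
   `|` (~` [set w | c x w] `&` [set w | (\sum_(l <- s) c l w)%N = m.+1])).
  by apply: measurableU; apply: measurableI => //; exact: measurableC.
apply/seteqP; split => w /=; rewrite big_cons.
  case: (c x w) => /= h; [left | right]; split => //; lia.
move=> [[h1 h2]|[h1 h2]]; move: h1; case: (c x w) => //= h1; try lia.

Qed.

Lemma meas_deg {d} {T : measurableType d} (kn : nat -> nat)
  (chi : nat -> nat -> nat -> T -> bool) n j m :
  (forall n k l, (2 <= n)%N -> measurable [set w | chi n k l w]) -> (2 <= n)%N ->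
  measurable [set w | degree kn chi n j w = m].
Proof. by move=> hm n2; apply: meas_sum_eq => l; exact: hm. Qed.

Lemma ind_eq {T : Type} {R : realType} (f : T -> nat) (dd : nat) (w : T) :
  (((f w == dd) : nat)%:R : R) = \1_[set x | f x = dd] w.
Proof.
rewrite indicE; case: eqP => h.
  by rewrite mem_set.
by rewrite memNset.
Qed.

Definition PF {T : Type} {R : realType} (kn : nat -> nat)
  (chi : nat -> nat -> nat -> T -> bool) (n dd : nat) (w : T) : R :=
  (kn n)%:R^-1 * \sum_(1 <= j < (kn n).+1) \1_[set x | degree kn chi n j x = dd] w.

Lemma PfracE {T : Type} {R : realType} (kn : nat -> nat)
  (chi : nat -> nat -> nat -> T -> bool) (n dd : nat) (w : T) :
  Pfrac kn chi n dd w = PF (R:=R) kn chi n dd w.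
Proof.
rewrite /Pfrac /PF /Ncount natr_sum mulrC; congr (_ * _).
by apply: eq_bigr => j _; rewrite ind_eq.
Qed.
Lemma sum_indic_nat {R : realType} (a b j : nat) : (a <= j < b)%N ->
  \sum_(a <= l < b) ((l == j)%:R : R) = 1.
Proof.
move=> hj; rewrite (bigD1_seq j) ?mem_index_iota ?iota_uniq //= eqxx.
by rewrite big1 ?addr0 // => i /negbTE ->.
Qed.

Lemma EPF {d} {T : measurableType d} {R : realType} (P : probability T R)
  (kn : nat -> nat) (chi : nat -> nat -> nat -> T -> bool) (n dd : nat) :
  (1 <= kn n)%N ->
  (forall j m, measurable [set w | degree kn chi n j w = m]) ->
  (forall j, (1 <= j <= kn n)%N ->
     P [set w | degree kn chi n j w = dd] = P [set w | degree kn chi n 1 w = dd]) ->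
  Rint P (PF kn chi n dd) = fine (P [set w | degree kn chi n 1 w = dd]).
Proof.
move=> hk hm hid.
have bI : forall j, bm (\1_[set w | degree kn chi n j w = dd] : T -> R).
  by move=> j; apply: bm_indic.
rewrite /PF RiZ; last by apply: bm_sum.
rewrite Ri_sum //.
rewrite (eq_big_nat _ _ (F2 := fun _ => fine (P [set w | degree kn chi n 1 w = dd]))); last first.
  by move=> j hj; rewrite Ri_indic // hid.
rewrite sumr_const_nat subn1 /= -mulr_natr.
have k0 : ((kn n)%:R : R) != 0 by rewrite pnatr_eq0 -lt0n.
by field.
Qed.

Lemma EPF2 {d} {T : measurableType d} {R : realType} (P : probability T R)
  (kn : nat -> nat) (chi : nat -> nat -> nat -> T -> bool) (n dd : nat) :
  (1 <= kn n)%N ->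
  (forall j m, measurable [set w | degree kn chi n j w = m]) ->
  (forall j, (1 <= j <= kn n)%N ->
     P [set w | degree kn chi n j w = dd] = P [set w | degree kn chi n 1 w = dd]) ->
  (forall j l, (1 <= j <= kn n)%N -> (1 <= l <= kn n)%N -> j <> l ->
     P [set w | degree kn chi n j w = dd /\ degree kn chi n l w = dd] =
     P [set w | degree kn chi n 1 w = dd /\ degree kn chi n 2 w = dd]) ->
  Rint P (fun w => PF kn chi n dd w ^+ 2) =
  (fine (P [set w | degree kn chi n 1 w = dd /\ degree kn chi n 2 w = dd]) * (kn n)%:R +
   (fine (P [set w | degree kn chi n 1 w = dd]) -
    fine (P [set w | degree kn chi n 1 w = dd /\ degree kn chi n 2 w = dd]))) / (kn n)%:R.
Proof.
move=> hk hm hid hid2.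
set p := fine (P [set w | degree kn chi n 1 w = dd]).
set q := fine (P [set w | degree kn chi n 1 w = dd /\ degree kn chi n 2 w = dd]).
set E := fun j => [set w | degree kn chi n j w = dd].
have bI : forall j, bm (\1_(E j) : T -> R) by move=> j; exact: (bm_indic _ (hm j dd)).
have bII : forall j l, bm (fun w => (\1_(E j) w * \1_(E l) w : R)).
  by move=> j l; apply: bm_mul.
set k := kn n.
rewrite (_ : (fun w => _) = (fun w => (k%:R^-1 * k%:R^-1) *
   \sum_(1 <= j < k.+1) \sum_(1 <= l < k.+1) (\1_(E j) w * \1_(E l) w : R))); last first.
  apply/funext => w; rewrite /PF expr2 mulrACA; congr (_ * _).
  rewrite mulr_suml; apply: eq_bigr => j _; rewrite mulr_sumr //.
rewrite RiZ; last by apply: bm_sum => j; apply: bm_sum.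
rewrite Ri_sum; last by move=> j; apply: bm_sum.
rewrite (eq_big_nat _ _ (F2 := fun _ => q * k%:R + (p - q))); last first.
  move=> j hj; rewrite Ri_sum //.
  rewrite (eq_big_nat _ _ (F2 := fun l => q + (l == j)%:R * (p - q))); last first.
    move=> l hl.
    have -> : (fun w => (\1_(E j) w * \1_(E l) w : R)) = \1_(E j `&` E l).
      apply/funext => w; rewrite !indicE in_setI.
      by case: (w \in E j); case: (w \in E l); rewrite /= ?mulr1 ?mulr0.
    rewrite Ri_indic; last exact: measurableI (hm j dd) (hm l dd).
    case: eqP => [->|hlj].
      by rewrite setIid /E hid // -/p /= mul1r addrC subrK.
    rewrite hid2 //; last by move=> h; apply: hlj; rewrite h. rewrite /= mul0r addr0 //.
  rewrite big_split /= sumr_const_nat subn1 /= -big_distrl /= sum_indic_nat //.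
  by rewrite mul1r mulr_natr.
rewrite sumr_const_nat subn1 /=.
have k0 : (k%:R : R) != 0 by rewrite pnatr_eq0 -lt0n.
rewrite -mulr_natr; field; exact: k0.
Qed.
Lemma dom_cvg {R : realType} (a e : nat -> R) (c C : R) : 0 < C ->
  e @ \oo --> 0 -> (\forall n \near \oo, `|c - a n| <= C * e n) -> a @ \oo --> c.
Proof.
move=> C0 he hd; apply/cvgrPdist_le => del del0.
have he' : \forall n \near \oo, `|0 - e n| <= del / C.
  by move/cvgrPdist_le : he; apply; exact: divr_gt0.
apply: filterS2 hd he' => n h1 h2.
apply: le_trans h1 _.
rewrite sub0r normrN in h2.
have : C * e n <= C * `|e n| by rewrite ler_pM2l // ler_norm.
move=> h3; apply: le_trans h3 _.
by rewrite -ler_pdivlMl // mulrC.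
Qed.

Lemma e_bound {d} {T : measurableType d} {R : realType} (P : probability T R)
  (Y : T -> R) (c B eps : R) : bm Y -> 0 < eps -> (forall w, `|Y w - c| <= B) ->
  Rint P (fun w => `|Y w - c|) <= eps + B * fine (P [set w | eps <= `|Y w - c|]).
Proof.
move=> bY e0 hB.
have bZ : bm (fun w => `|Y w - c|) by apply: bm_norm; apply: bm_add => //; exact: bm_cst.
have mA : measurable [set w | eps <= `|Y w - c|].
  have := (proj1 bZ) measurableT _ (measurable_itv `[eps, +oo[).
  rewrite setTI; congr measurable; apply/seteqP; split => w /=;
    by rewrite in_itv /= andbT.
rewrite -[fine _](Ri_indic P _ mA) -[X in X + _](Ri_cst P eps) -RiZ; last exact: bm_indic.
rewrite -RiD; [|exact: bm_cst|by apply: bm_mul; [exact: bm_cst|exact: bm_indic]].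
apply: Ri_le => //.
  by apply: bm_add; [exact: bm_cst|apply: bm_mul; [exact: bm_cst|exact: bm_indic]].
move=> w; rewrite indicE; case: (boolP (w \in _)) => hw.
  rewrite mulr1; apply: le_trans (hB w) _; rewrite lerDr; exact: ltW.
rewrite mulr0 addr0; apply: ltW; rewrite ltNge; apply/negP => h; apply/negP: hw.
by rewrite negbK mem_set.
Qed.
Lemma e_cvg {d} {T : measurableType d} {R : realType} (P : probability T R)
  (Y : nat -> T -> R) (c B : R) : 0 < B ->
  (\forall n \near \oo, bm (Y n) /\ forall w, `|Y n w - c| <= B) ->
  (forall eps, 0 < eps -> (fun n => P [set w | eps <= `|Y n w - c|]) @ \oo --> 0%E) ->
  (fun n => Rint P (fun w => `|Y n w - c|)) @ \oo --> 0.
Proof.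
move=> B0 hbm hprob; apply/cvgrPdist_le => del del0.
have del2 : 0 < del / 2 by rewrite divr_gt0.
have := hprob _ del2; move/fine_cvgP => [_ h].
have h' : \forall n \near \oo, `|0 - (fine \o (fun n => P [set w | del / 2 <= `|Y n w - c|])) n| <= del / 2 / B.
  by move/cvgrPdist_le : h; apply; exact: divr_gt0.
apply: filterS2 hbm h' => n [bY hB] h2.
rewrite sub0r normrN ger0_norm; last first.
  by rewrite /Rint; apply: Rintegral_ge0 => x _.
apply: le_trans (e_bound P _ _ _ _ bY del2 hB) _.
rewrite sub0r normrN /= in h2.
have h3 : B * fine (P [set w | del / 2 <= `|Y n w - c|]) <= del / 2.
  rewrite -ler_pdivlMl // [B^-1 * _]mulrC; exact: le_trans (ler_norm _) h2.
lra.
Qed.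
Lemma PF_bounds {T : Type} {R : realType} (kn : nat -> nat)
  (chi : nat -> nat -> nat -> T -> bool) (n dd : nat) (w : T) :
  (1 <= kn n)%N -> 0 <= PF (R:=R) kn chi n dd w <= 1.
Proof.
move=> hk; rewrite /PF.
have k0 : (0 : R) < (kn n)%:R by rewrite ltr0n.
have S0 : (0 : R) <= \sum_(1 <= j < (kn n).+1) \1_[set x | degree kn chi n j x = dd] w.
  by apply: sumr_ge0 => j _; rewrite indicE.
have S1 : \sum_(1 <= j < (kn n).+1) \1_[set x | degree kn chi n j x = dd] w <= ((kn n)%:R : R).
  apply: le_trans (_ : \sum_(1 <= j < (kn n).+1) (1 : R) <= _).
    apply: ler_sum => j _; rewrite indicE; by case: (_ \in _).
  by rewrite sumr_const_nat subn1.
apply/andP; split; first by rewrite mulr_ge0 // invr_ge0 ltW.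
by rewrite ler_pdivrMl // mulr1.
Qed.

Lemma inv_cvg0 {R : realType} (kn : nat -> nat) :
  (forall M : nat, \forall n \near \oo, (M <= kn n)%N) ->
  (fun n => ((kn n)%:R - 1)^-1 : R) @ \oo --> 0.
Proof.
move=> hinf; apply/cvgrPdist_le => del del0.
set t := Num.trunc (del^-1).
apply: filterS (hinf t.+2) => n hn.
have h1 : del^-1 < (t.+1)%:R by rewrite -truncn_le_nat.
have h2 : ((t.+2)%:R : R) <= (kn n)%:R by rewrite ler_nat.
have h3 : ((t.+2)%:R : R) = (t.+1)%:R + 1 by rewrite -natr1.
have h4 : (0 : R) <= t%:R by [].
have h5 : ((t.+1)%:R : R) = t%:R + 1 by rewrite -natr1.
have hpos : (0 : R) < (kn n)%:R - 1 by lra.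
have hlt : del^-1 < (kn n)%:R - 1 by lra.
rewrite sub0r normrN ger0_norm; last by rewrite invr_ge0 ltW.
rewrite invf_plt ?posrE // in hlt; exact: ltW.
Qed.
Lemma pq_cvg {d} {T : measurableType d} {R : realType} (P : probability T R)
  (kn : nat -> nat) (chi : nat -> nat -> nat -> T -> bool) (c : R) (dd : nat) :
  (forall n, (2 <= n)%N -> (2 <= kn n)%N) ->
  (forall n k l, (2 <= n)%N -> measurable [set w | chi n k l w]) ->
  (forall M : nat, \forall n \near \oo, (M <= kn n)%N) ->
  (forall n k m, (2 <= n)%N -> (1 <= k <= kn n)%N ->
     P [set w | degree kn chi n k w = m] = P [set w | degree kn chi n 1 w = m]) ->
  (forall n k l a b, (2 <= n)%N -> (1 <= k <= kn n)%N -> (1 <= l <= kn n)%N ->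
     k <> l ->
     P [set w | degree kn chi n k w = a /\ degree kn chi n l w = b] =
     P [set w | degree kn chi n 1 w = a /\ degree kn chi n 2 w = b]) ->
  cvg_in_prob P (fun n => Pfrac kn chi n dd) c ->
  (fun n => fine (P [set w | degree kn chi n 1 w = dd])) @ \oo --> c /\
  (fun n => fine (P [set w | degree kn chi n 1 w = dd /\ degree kn chi n 2 w = dd]))
     @ \oo --> c ^+ 2.
Proof.
move=> hk2 hmeas hinf hid hid2 hprob.
set Y := fun n => PF (R:=R) kn chi n dd.
set B := 1 + `|c|.
have B0 : 0 < B by rewrite /B ltr_pwDl.
have hn2 : \forall n \near \oo, (2 <= n)%N.
  by exists 2%N => // n /=.
have hbY : forall n, (2 <= n)%N -> bm (Y n).
  move=> n n2; apply: bm_mul; first exact: bm_cst.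
  apply: bm_sum => j; apply: bm_indic; exact: meas_deg.
have hYb : forall n w, (2 <= n)%N -> 0 <= Y n w <= 1.
  move=> n w n2; apply: PF_bounds; have := hk2 n n2; lia.
have hbm : \forall n \near \oo, bm (Y n) /\ forall w, `|Y n w - c| <= B.
  apply: filterS hn2 => n n2; split; first exact: hbY.
  move=> w; have /andP[h0 h1] := hYb n w n2.
  apply: le_trans (ler_normB _ _) _; rewrite /B lerD2r ger0_norm //.
have hprob' : forall eps, 0 < eps ->
    (fun n => P [set w | eps <= `|Y n w - c|]) @ \oo --> 0%E.
  move=> eps e0; have := hprob eps e0.
  suff -> : (fun n => P [set w | eps <= `|Y n w - c|]) =
    (fun n => P [set w | eps <= `|Pfrac kn chi n dd w - c|]) by [].
  apply/funext => n; congr (P _); apply/funext => w.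
  by rewrite /= PfracE.
have he := e_cvg P Y c B B0 hbm hprob'.
set p := fun n => fine (P [set w | degree kn chi n 1 w = dd]).
set q := fun n => fine (P [set w | degree kn chi n 1 w = dd /\ degree kn chi n 2 w = dd]).
have hmeasn : forall n, (2 <= n)%N -> forall j m, measurable [set w | degree kn chi n j w = m].
  by move=> n n2 j m; exact: meas_deg.
have hEp : forall n, (2 <= n)%N -> Rint P (Y n) = p n.
  move=> n n2; rewrite /Y EPF //; [have := hk2 n n2; lia| exact: hmeasn |].
  by move=> j hj; exact: hid.
have hE2 : forall n, (2 <= n)%N -> Rint P (fun w => Y n w ^+ 2) =
    (q n * (kn n)%:R + (p n - q n)) / (kn n)%:R.
  move=> n n2; rewrite /Y EPF2 //; [have := hk2 n n2; lia| exact: hmeasn | |].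
    by move=> j hj; exact: hid.
  by move=> j l hj hl hjl; exact: hid2.
have hp : p @ \oo --> c.
  apply: (dom_cvg _ (fun n => Rint P (fun w => `|Y n w - c|)) c 1) => //.
  apply: filterS hn2 => n n2; rewrite mul1r -hEp // distrC.
  rewrite (_ : Rint P (Y n) - c = Rint P (fun w => Y n w - c)).
    by apply: Ri_norm; apply: bm_add; [exact: hbY | exact: bm_cst].
  by rewrite RiD ?Ri_cst //; [exact: hbY | exact: bm_cst].
set E2 := fun n => Rint P (fun w => Y n w ^+ 2).
have hE2c : E2 @ \oo --> c ^+ 2.
  apply: (dom_cvg _ (fun n => Rint P (fun w => `|Y n w - c|)) _ B) => //.
  apply: filterS hn2 => n n2; rewrite distrC.
  have bY2 : bm (fun w => Y n w ^+ 2) by apply: bm_mul; exact: hbY.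
  have bYc : bm (fun w => Y n w - c) by apply: bm_add; [exact: hbY | exact: bm_cst].
  rewrite (_ : E2 n - c ^+ 2 = Rint P (fun w => Y n w ^+ 2 - c ^+ 2)); last first.
    by rewrite RiD ?Ri_cst //; exact: bm_cst.
  apply: le_trans (Ri_norm _ _ _) _.
    by apply: bm_add => //; exact: bm_cst.
  rewrite -RiZ; last exact: bm_norm.
  apply: Ri_le.
  - by apply: bm_norm; apply: bm_add => //; exact: bm_cst.
  - by apply: bm_mul; [exact: bm_cst | exact: bm_norm].
  move=> w; rewrite subrXX big_ord_recr /= big_ord1 /= expr0 expr1 mulr1 mul1r.
  rewrite normrM mulrC ler_wpM2r //.
  have /andP[h0 h1] := hYb n w n2.
  apply: le_trans (ler_normD _ _) _; rewrite /B lerD2r ger0_norm //.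
have hq : q @ \oo --> c ^+ 2.
  have hlim : (fun n => E2 n + (E2 n - p n) * ((kn n)%:R - 1)^-1) @ \oo --> c ^+ 2.
    rewrite -[X in _ --> X]addr0.
    apply: cvgD => //.
    rewrite -[X in _ --> X](mulr0 (c ^+ 2 - c)).
    apply: cvgM; [exact: cvgB | exact: inv_cvg0].
  apply: cvg_trans hlim; apply: near_eq_cvg; apply: filterS hn2 => n n2.
  have k2 := hk2 n n2.
  have k0 : ((kn n)%:R : R) != 0 by rewrite pnatr_eq0; lia.
  have k1 : ((kn n)%:R : R) - 1 != 0.
    rewrite subr_eq0 pnatr_eq1; lia.
  rewrite /E2 hE2 //; field; by rewrite k0 k1.
by split.
Qed.
Lemma cdf_sum {d} {T : measurableType d} {R : realType} (P : probability T R)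
  (X : T -> nat) : (forall m, measurable [set w | X w = m]) -> forall M,
  measurable [set w | (X w <= M)%N] /\
  fine (P [set w | (X w <= M)%N]) = \sum_(m < M.+1) fine (P [set w | X w = m]).
Proof.
move=> hX; elim => [|M [IHm IH]].
  have -> : [set w | (X w <= 0)%N] = [set w | X w = 0%N].
    by apply/seteqP; split => w /=; case: (X w).
  by split; [exact: hX | rewrite big_ord1].
have -> : [set w | (X w <= M.+1)%N] = [set w | (X w <= M)%N] `|` [set w | X w = M.+1].
  apply/seteqP; split => w /=.
    move=> h; have [e|e] := eqVneq (X w) M.+1; [right | left] => //.
    by move/eqP: e; lia.
  by case => h; lia.
split; first by apply: measurableU => //; exact: hX.
rewrite measureU //; last first.
  by apply/seteqP; split => w //= [h1 h2]; move: h1; rewrite h2 ltnn.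

rewrite fineD; [|exact: fin_num_measure|exact: fin_num_measure].
by rewrite IH [RHS]big_ord_recr.
Qed.

Lemma cdfN_eq {d} {T : measurableType d} {R : realType} (P : probability T R)
  (X : T -> nat) (x : R) : (forall m, measurable [set w | X w = m]) ->
  cdfN P X x = if 0 <= x then \sum_(m < (Num.trunc x).+1) fine (P [set w | X w = m])
               else 0.
Proof.
move=> hX; rewrite /cdfN; case: ifP => hx.
  rewrite (_ : [set w | (X w)%:R <= x] = [set w | (X w <= Num.trunc x)%N]).
    exact: (cdf_sum P X hX _).2.
  by apply/seteqP; split => w /=; rewrite truncn_ge_nat.
rewrite (_ : [set w | (X w)%:R <= x] = set0) ?measure0 //.
apply/seteqP; split => w //= h; move/negbT: hx; rewrite -ltNge => hx.
have : (0 : R) <= (X w)%:R by [].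
lra.
Qed.

Lemma cvg_bigsum {R : realType} (I : Type) (s : seq I) (f : I -> nat -> R) (l : I -> R) :
  (forall i, f i @ \oo --> l i) ->
  (fun n => \sum_(i <- s) f i n) @ \oo --> \sum_(i <- s) l i.
Proof.
move=> hf; elim: s => [|i s IH].
  rewrite big_nil; under eq_fun do rewrite big_nil; exact: cvg_cst.
rewrite big_cons; under eq_fun do rewrite big_cons.
exact: cvgD.
Qed.
Definition Qmu {R : realType} (L : nat -> R) (HL : forall k, 0 <= L k) :=
  mseries (fun k => mscale (NngNum (HL k)) (@dirac _ nat k R)) 0.

Lemma QmuE {R : realType} (L : nat -> R) (HL : forall k, 0 <= L k) (A : set nat) :
  Qmu L HL A = limn (fun N => \sum_(0 <= k < N) ((L k)%:E * (\1_A k)%:E))%E.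
Proof. by []. Qed.

Lemma QmuT {R : realType} (L : nat -> R) (HL : forall k, 0 <= L k) :
  (fun N => \sum_(0 <= dd < N) L dd) @ \oo --> (1 : R) -> Qmu L HL setT = 1%E.
Proof.
move=> hs; rewrite QmuE.
apply: cvg_lim => //.
rewrite (_ : (fun N => _) = (fun N => (\sum_(0 <= k < N) L k)%:E)); last first.
  apply/funext => N; rewrite -sumEFin; apply: eq_bigr => k _.
  by rewrite indicE in_setT mule1.
by apply/fine_cvgP; split; [exact: nearW | exact: hs].
Qed.

Lemma Qmu1 {R : realType} (L : nat -> R) (HL : forall k, 0 <= L k) (m : nat) :
  Qmu L HL [set m] = (L m)%:E.
Proof.
rewrite QmuE; apply: lim_near_cst => //.
exists m.+1 => // N /= hN.
rewrite (bigD1_seq m) ?mem_index_iota ?iota_uniq //=.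
rewrite indicE mem_set // mule1 big1 ?adde0 // => i /negbTE hi.
by rewrite indicE memNset ?mule0 // => /= h; move: hi; rewrite h eqxx.
Qed.
Theorem proposition3 (d : measure_display) (T : measurableType d) (R : realType)
  (P : probability T R) (kn : nat -> nat) (chi : nat -> nat -> nat -> T -> bool)
  (L : nat -> R) :
  (* graphs indexed by n >= 2, node sets {1..k_n} with k_n >= 2 *)
  (forall n, (2 <= n)%N -> (2 <= kn n)%N) ->
  (* edge indicators are random variables *)
  (forall n k l, (2 <= n)%N -> measurable [set w | chi n k l w]) ->
  (* |V_n| -> oo *)
  (forall M : nat, \forall n \near \oo, (M <= kn n)%N) ->
  (* D_{n,k} has the same distribution as D_{n,1} *)
  (forall n k m, (2 <= n)%N -> (1 <= k <= kn n)%N ->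
     P [set w | degree kn chi n k w = m] = P [set w | degree kn chi n 1 w = m]) ->
  (* (D_{n,k}, D_{n,l}) has the same joint distribution as (D_{n,1}, D_{n,2}) *)
  (forall n k l a b, (2 <= n)%N -> (1 <= k <= kn n)%N -> (1 <= l <= kn n)%N ->
     k <> l ->
     P [set w | degree kn chi n k w = a /\ degree kn chi n l w = b] =
     P [set w | degree kn chi n 1 w = a /\ degree kn chi n 2 w = b]) ->
  (* P_n(d) -> L(d) in probability *)
  (forall dd : nat, cvg_in_prob P (fun n => Pfrac kn chi n dd) (L dd)) ->
  (* L is a pmf on N *)
  (forall dd, 0 <= L dd) ->
  (fun N => \sum_(0 <= dd < N) L dd) @ \oo --> (1 : R) ->
  (* (i) *)
  (exists (d' : measure_display) (T' : measurableType d') (Q : probability T' R)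
          (D : T' -> nat),
     (forall m, measurable [set w | D w = m]) /\
     (forall m, fine (Q [set w | D w = m]) = L m) /\
     cvg_in_distrN P (fun n => degree kn chi n 1) Q D) /\
  (* (ii) *)
  (forall dd : nat,
     (fun n => covariance P
        (fun w => ((degree kn chi n 1 w == dd) : nat)%:R)
        (fun w => ((degree kn chi n 2 w == dd) : nat)%:R)) @ \oo --> 0%E).
Proof.
move=> hk2 hmeas hinf hid hid2 hprob HL hsum.
have hpq := fun dd => pq_cvg P kn chi (L dd) dd hk2 hmeas hinf hid hid2 (hprob dd).
have hn2 : \forall n \near \oo, (2 <= n)%N by exists 2%N => // n /=.
split.
  set Q := mnormalize (Qmu L HL) (@dirac _ nat 0%N R).
  have QE : forall A, Q A = Qmu L HL A.
    move=> A; have QT := QmuT L HL hsum; rewrite /Qmu in QT.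
    rewrite /Q /mnormalize /= QT /=.
    by rewrite onee_eq0 /= invr1 mule1.
  have hQ : forall m, fine (Q [set w | w = m]) = L m.
    by move=> m; rewrite QE Qmu1.
  exists default_measure_display, nat, Q, (fun w => w).
  split; first by [].
  split; first exact: hQ.
  move=> x _; rewrite (cdfN_eq Q) //.
  under eq_bigr do rewrite hQ.
  have hG : \forall n \near \oo,
      (fun n => if 0 <= x then \sum_(m < (Num.trunc x).+1)
                fine (P [set w | degree kn chi n 1 w = m]) else 0) n =
      cdfN P (degree kn chi n 1) x.
    apply: filterS hn2 => n n2 /=; rewrite cdfN_eq //.
    by move=> m; exact: meas_deg.
  apply: cvg_trans (near_eq_cvg hG) _.
  case: ifP => _; last exact: cvg_cst.
  by apply: cvg_bigsum => m; exact: (hpq m).1.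
move=> dd.
have [hp hq] := hpq dd.
set p := fun n => fine (P [set w | degree kn chi n 1 w = dd]).
set q := fun n => fine (P [set w | degree kn chi n 1 w = dd /\ degree kn chi n 2 w = dd]).
have hr : (fun n => (q n - p n * p n)%:E) @ \oo --> 0%E.
  apply/fine_cvgP; split; first exact: nearW.
  rewrite (_ : 0 = L dd ^+ 2 - L dd * L dd); last by rewrite expr2 subrr.
  by apply: cvgB => //; exact: cvgM.
apply: cvg_trans hr; apply: near_eq_cvg; apply: filterS hn2 => n n2 /=.
set E := fun j => [set w | degree kn chi n j w = dd].
have mE : forall j, measurable (E j) by move=> j; exact: meas_deg.
have -> : (fun w => ((degree kn chi n 1 w == dd) : nat)%:R) = (\1_(E 1%N) : T -> R).
  by apply/funext => w; rewrite ind_eq.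
have -> : (fun w => ((degree kn chi n 2 w == dd) : nat)%:R) = (\1_(E 2%N) : T -> R).
  by apply/funext => w; rewrite ind_eq.
have b1 := bm_indic (R:=R) _ (mE 1%N).
have b2 := bm_indic (R:=R) _ (mE 2%N).
have b12 := bm_mul _ _ b1 b2.
rewrite covarianceE; [|exact: bm_Lfun|exact: bm_Lfun|exact: (bm_Lfun P _ b12)].
rewrite (bm_E P _ b12) (bm_E P _ b1) (bm_E P _ b2).
have h12 : Rint P (fun x => \1_(E 1%N) x * \1_(E 2%N) x) = q n.
  have -> : (fun w => (\1_(E 1%N) w * \1_(E 2%N) w : R)) = \1_(E 1%N `&` E 2%N).
    apply/funext => w; rewrite !indicE in_setI.
    by case: (w \in E 1%N); case: (w \in E 2%N); rewrite /= ?mulr1 ?mulr0.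
  by rewrite Ri_indic //; exact: measurableI.
have h1 : Rint P (\1_(E 1%N)) = p n by rewrite Ri_indic.
have h2 : Rint P (\1_(E 2%N)) = p n.
  by rewrite Ri_indic // /E hid //; have := hk2 n n2; lia.
rewrite /Rint in h1 h2 h12; rewrite h12 h1 h2.
by rewrite -EFinM -EFinB.
Qed.
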